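(* Let $K_x,K_y,K_z>0$. Then $\min_{\vec q\in[-\pi,\pi]^2}\epsilon_{\vec q,1}=0$ if and only if $|K_x-K_y|\le K_z\le K_x+K_y$ (i.e. $K_x,K_y,K_z$ satisfy all three triangle inequalities). When these inequalities hold, $\epsilon_{\vec q,1}$ vanishes at $\vec q=(0,\pm q_y^* )$ with $\cos q_y^*=\dfrac{\cosh2K_z-\cosh2K_x\cosh2K_y}{\sinh2K_x\sinh2K_y}$; otherwise $\epsilon_{\vec q,1}>0$ for all $\vec q$.
   Context: For $\vec q=(q_x,q_y)$, with $P=\begin{pmatrix}0&i&0&0\\-i&0&0&0\\0&0&0&i\\0&0&-i&0\end{pmatrix}$, $Q=\begin{pmatrix}0&ie^{-iq_y}&0&0\\-ie^{iq_y}&0&0&0\\0&0&0&ie^{iq_y}\\0&0&-ie^{-iq_y}&0\end{pmatrix}$, $R=\begin{pmatrix}0&0&0&ie^{-iq_x}\\0&0&-i&0\\0&i&0&0\\-ie^{iq_x}&0&0&0\end{pmatrix}$, let $T_{\vec q}=e^{2K_xP}e^{2K_yQ}e^{2K_zR}$. Its eigenvalues are $e^{\pm\epsilon_{\vec q,1}},e^{\pm\epsilon_{\vec q,2}}$ with $0\le\epsilon_{\vec q,1}\le\epsilon_{\vec q,2}$ real. Equivalently $z_j=\cosh\epsilon_{\vec q,j}$ are the roots of $z^2+Az+B=0$ with $A=-2c_3(c_1c_2+s_1s_2\cos q_y)$, $B=\tfrac18S_1S_2(3+C_3-2s_3^2\cos q_x)\cos q_y+\tfrac12s_1^2s_2^2\cos2q_y+\tfrac14s_3^2(1-C_1C_2)\cos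 q_x+\tfrac18(C_1+C_2+3C_3)+\tfrac14C_1C_2+\tfrac18C_1C_2C_3$, where $c_j=\cosh2K_j$, $s_j=\sinh2K_j$, $C_j=\cosh4K_j$, $S_j=\sinh4K_j$ and indices $1,2,3$ stand for $x,y,z$.
   Formalization: $\epsilon_{\vec q,1}$ is the arccosh of the smaller root of $z^2+Az+B=0$, and where A²−4B < 0 it is taken as the arccosh of −A/2, the real part of the complex roots. Apart from conventions, each condition added here is assumed in the paper as well or is needed for the statement above to hold. *)

(* Defs.v *)
From Stdlib Require Import Reals.
Open Scope R_scope.

(* Coefficients of the quadratic z^2 + A z + B = 0 whose roots are
   z_j = cosh eps_{q,j}  (as given in the paper's context).
   Index 1,2,3 = x,y,z.  c_j = cosh 2K_j, s_j = sinh 2K_j,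
   C_j = cosh 4K_j, S_j = sinh 4K_j. *)
Definition coefA (Kx Ky Kz qx qy : R) : R :=
  - 2 * cosh (2*Kz) * (cosh (2*Kx) * cosh (2*Ky) + sinh (2*Kx) * sinh (2*Ky) * cos qy).

Definition coefB (Kx Ky Kz qx qy : R) : R :=
  let s1 := sinh (2*Kx) in let s2 := sinh (2*Ky) in let s3 := sinh (2*Kz) in
  let C1 := cosh (4*Kx) in let C2 := cosh (4*Ky) in let C3 := cosh (4*Kz) in
  let S1 := sinh (4*Kx) in let S2 := sinh (4*Ky) in
  / 8 * S1 * S2 * (3 + C3 - 2 * s3 ^ 2 * cos qx) * cos qy
  + / 2 * s1 ^ 2 * s2 ^ 2 * cos (2 * qy)
  + / 4 * s3 ^ 2 * (1 - C1 * C2) * cos qx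
  + / 8 * (C1 + C2 + 3 * C3) + / 4 * C1 * C2 + / 8 * C1 * C2 * C3.

Definition z1 (Kx Ky Kz qx qy : R) : R :=
  let A := coefA Kx Ky Kz qx qy in let B := coefB Kx Ky Kz qx qy in
  (- A - sqrt (A ^ 2 - 4 * B)) / 2.

Definition acosh (z : R) : R := ln (z + sqrt (z ^ 2 - 1)).

(* eps_{q,1} = arccosh z_1 (the smaller nonnegative exponent, since
   cosh is increasing on [0,+oo)). *)
Definition eps1 (Kx Ky Kz qx qy : R) : R := acosh (z1 Kx Ky Kz qx qy).

Definition in_BZ (qx qy : R) : Prop := -PI <= qx <= PI /\ -PI <= qy <= PI.

Definition min_BZ_is (f : R -> R -> R) (m : R) : Prop :=
  (exists qx qy, in_BZ qx qy /\ f qx qy = m) /\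
  (forall qx qy, in_BZ qx qy -> m <= f qx qy).

(* Main.v *)
Require Import Defs.
From Stdlib Require Import Reals Lra Psatz.
Open Scope R_scope.

Lemma ch_sq t : cosh t ^ 2 = 1 + sinh t ^ 2.
Proof. unfold cosh, sinh; rewrite exp_Ropp. assert (exp t > 0) by apply exp_pos. field. lra. Qed.

Lemma ch2 t : cosh (2*t) = 1 + 2 * sinh t ^ 2.
Proof. unfold cosh, sinh. replace (2*t) with (t+t) by ring. rewrite !exp_Ropp, exp_plus.
  assert (exp t > 0) by apply exp_pos. field. lra. Qed.

Lemma sh2 t : sinh (2*t) = 2 * sinh t * cosh t.
Proof. unfold cosh, sinh. replace (2*t) with (t+t) by ring. rewrite !exp_Ropp, exp_plus.
  assert (exp t > 0) by apply exp_pos. field. lra. Qed.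

Lemma ch_minus a b : cosh (a - b) = cosh a * cosh b - sinh a * sinh b.
Proof. unfold cosh, sinh. unfold Rminus. rewrite Ropp_plus_distr, Ropp_involutive, !exp_plus, !exp_Ropp.
  assert (exp a > 0) by apply exp_pos. assert (exp b > 0) by apply exp_pos. field. lra. Qed.

Lemma ch_plus a b : cosh (a + b) = cosh a * cosh b + sinh a * sinh b.
Proof. unfold cosh, sinh. rewrite Ropp_plus_distr, !exp_plus, !exp_Ropp.
  assert (exp a > 0) by apply exp_pos. assert (exp b > 0) by apply exp_pos. field. lra. Qed.

Lemma ch_even x : cosh (- x) = cosh x.
Proof. unfold cosh. rewrite Ropp_involutive. lra. Qed.

Lemma ch_diff a b : cosh b - cosh a = (exp b - exp a) * (1 - / (exp a * exp b)) / 2.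
Proof. unfold cosh. rewrite !exp_Ropp.
  assert (exp a > 0) by apply exp_pos. assert (exp b > 0) by apply exp_pos. field. lra. Qed.

Lemma ch_le a b : 0 <= a <= b -> cosh a <= cosh b.
Proof. intros [Ha Hb].
  assert (exp a >= 1). { destruct Ha as [Ha|Ha]. left. rewrite <- exp_0. apply exp_increasing; lra. subst; rewrite exp_0; lra. }
  assert (exp a <= exp b). { destruct Hb as [Hb|Hb]. left; apply exp_increasing; lra. subst; lra. }
  assert (exp a * exp b >= 1) by nra.
  assert (0 <= 1 - / (exp a * exp b)). { assert (/ (exp a * exp b) <= 1). rewrite <- Rinv_1. apply Rinv_le_contravar; lra. lra. }
  pose proof (ch_diff a b). nra. Qed.

Lemma ch_lt a b : 0 <= a < b -> cosh a < cosh b.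
Proof. intros [Ha Hb].
  assert (exp a >= 1). { destruct Ha as [Ha|Ha]. left. rewrite <- exp_0. apply exp_increasing; lra. subst; rewrite exp_0; lra. }
  assert (exp a < exp b) by (apply exp_increasing; lra).
  assert (exp a * exp b > 1) by nra.
  assert (0 < 1 - / (exp a * exp b)). { assert (/ (exp a * exp b) < 1). rewrite <- Rinv_1. apply Rinv_lt_contravar; lra. lra. }
  pose proof (ch_diff a b). nra. Qed.

Lemma ch_abs x : cosh x = cosh (Rabs x).
Proof. unfold Rabs; destruct (Rcase_abs x); [rewrite ch_even|]; reflexivity. Qed.

Lemma sh_pos x : 0 < x -> 0 < sinh x.
Proof. intros; rewrite <- sinh_0; apply sinh_lt; lra. Qed.

Definition Xf Kx Ky qy := cosh (2*Kx) * cosh (2*Ky) + sinh (2*Kx) * sinh (2*Ky) * cos qy.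

Lemma fone_id Kx Ky Kz qx qy :
  1 + coefA Kx Ky Kz qx qy + coefB Kx Ky Kz qx qy =
  (Xf Kx Ky qy - cosh (2*Kz)) ^ 2 + (1 - cos qx) * sinh (2*Kz) ^ 2 *
   ((cosh (4*Kx) * cosh (4*Ky) - 1) / 4 + sinh (2*Kx) * cosh (2*Kx) * sinh (2*Ky) * cosh (2*Ky) * cos qy).
Proof.
  unfold coefA, coefB, Xf.
  replace (4*Kx) with (2*(2*Kx)) by ring. replace (4*Ky) with (2*(2*Ky)) by ring.
  replace (4*Kz) with (2*(2*Kz)) by ring.
  rewrite (ch2 (2*Kx)), (ch2 (2*Ky)), (ch2 (2*Kz)), (sh2 (2*Kx)), (sh2 (2*Ky)), cos_2a_cos.
  pose proof (ch_sq (2*Kx)). pose proof (ch_sq (2*Ky)). pose proof (ch_sq (2*Kz)).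
  set (c1 := cosh (2*Kx)) in *. set (c2 := cosh (2*Ky)) in *. set (c3 := cosh (2*Kz)) in *.
  set (s1 := sinh (2*Kx)) in *. set (s2 := sinh (2*Ky)) in *. set (s3 := sinh (2*Kz)) in *.
  set (u := cos qx). set (v := cos qy).
  assert (E: (c1 * c2 + s1 * s2 * v - c3) ^ 2 = (1+s1^2)*(1+s2^2) + 2*c1*c2*s1*s2*v + s1^2*s2^2*v^2
     - 2*c3*(c1 * c2 + s1 * s2 * v) + (1 + s3^2)).
  { rewrite <- H, <- H0, <- H1. ring. }
  rewrite E. field.
Qed.

Lemma ch_ge1 x : 1 <= cosh x.
Proof. rewrite ch_abs, <- cosh_0. apply ch_le. pose proof (Rabs_pos x); lra. Qed.

Lemma ch_gt1 x : 0 < x -> 1 < cosh x.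
Proof. intros. rewrite <- cosh_0. apply ch_lt. lra. Qed.

Lemma Xf_bounds Kx Ky qy : 0 < Kx -> 0 < Ky ->
  cosh (2*Kx - 2*Ky) <= Xf Kx Ky qy <= cosh (2*Kx + 2*Ky).
Proof. intros. unfold Xf. rewrite ch_minus, ch_plus.
  pose proof (sh_pos (2*Kx) ltac:(lra)). pose proof (sh_pos (2*Ky) ltac:(lra)).
  pose proof (COS_bound qy). assert (0 < sinh (2*Kx) * sinh (2*Ky)) by nra. nra. Qed.

Lemma G_nonneg Kx Ky qy : 0 < Kx -> 0 < Ky ->
  0 <= (cosh (4*Kx) * cosh (4*Ky) - 1) / 4 + sinh (2*Kx) * cosh (2*Kx) * sinh (2*Ky) * cosh (2*Ky) * cos qy.
Proof. intros.
  replace (4*Kx) with (2*(2*Kx)) by ring. replace (4*Ky) with (2*(2*Ky)) by ring.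
  rewrite (ch2 (2*Kx)), (ch2 (2*Ky)).
  pose proof (sh_pos (2*Kx) ltac:(lra)). pose proof (sh_pos (2*Ky) ltac:(lra)).
  pose proof (ch_ge1 (2*Kx)). pose proof (ch_ge1 (2*Ky)).
  pose proof (ch_sq (2*Kx)). pose proof (ch_sq (2*Ky)).
  pose proof (COS_bound qy).
  set (c1 := cosh (2*Kx)) in *. set (c2 := cosh (2*Ky)) in *.
  set (s1 := sinh (2*Kx)) in *. set (s2 := sinh (2*Ky)) in *.
  set (P := s1*c1*s2*c2). set (L := (s1^2+s2^2)/2 + s1^2*s2^2).
  assert (HP : 0 <= P). { unfold P. left. pose proof (Rmult_lt_0_compat s1 c1 ltac:(lra) ltac:(lra)). pose proof (Rmult_lt_0_compat _ s2 H8 ltac:(lra)). apply (Rmult_lt_0_compat _ c2 H9); lra. }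
  assert (HL : 0 <= L) by (unfold L; pose proof (pow2_ge_0 s1); pose proof (pow2_ge_0 s2); pose proof (Rmult_le_pos _ _ (pow2_ge_0 s1) (pow2_ge_0 s2)); lra).
  assert (E : L^2 - P^2 = ((s1^2-s2^2)/2)^2).
  { unfold L, P. replace ((s1*c1*s2*c2)^2) with (s1^2*s2^2*c1^2*c2^2) by ring. rewrite H5, H6. field. }
  assert (P <= L). { assert (0 <= L^2 - P^2) by (rewrite E; apply pow2_ge_0). apply Rnot_lt_le; intro. assert (L*L < P*P) by (apply Rmult_le_0_lt_compat; lra). simpl in *. lra. }
  replace (((1 + 2 * s1 ^ 2) * (1 + 2 * s2 ^ 2) - 1) / 4) with L by (unfold L; field).
  fold P. nra. Qed.

Definition fone Kx Ky Kz qx qy := 1 + coefA Kx Ky Kz qx qy + coefB Kx Ky Kz qx qy.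

Lemma fone_ge Kx Ky Kz qx qy : 0 < Kx -> 0 < Ky ->
  (Xf Kx Ky qy - cosh (2*Kz)) ^ 2 <= fone Kx Ky Kz qx qy.
Proof. intros. unfold fone. rewrite fone_id. pose proof (G_nonneg Kx Ky qy H H0).
  pose proof (COS_bound qx).
  assert (0 <= (1 - cos qx) * sinh (2*Kz) ^ 2) by (apply Rmult_le_pos; nra).
  nra. Qed.

Lemma negA Kx Ky Kz qx qy : 0 < Kx -> 0 < Ky -> 0 < Kz -> 0 < - coefA Kx Ky Kz qx qy - 2.
Proof. intros. unfold coefA. fold (Xf Kx Ky qy).
  pose proof (Xf_bounds Kx Ky qy H H0). pose proof (ch_ge1 (2*Kx - 2*Ky)).
  pose proof (ch_gt1 (2*Kz) ltac:(lra)). nra. Qed.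

Lemma root_ge A B : 0 < -A - 2 -> 0 <= 1 + A + B -> 1 <= (- A - sqrt (A^2 - 4*B)) / 2.
Proof. intros. assert (sqrt (A^2-4*B) <= sqrt ((-A-2)^2)) by (apply sqrt_le_1_alt; nra).
  rewrite sqrt_pow2 in H1 by lra. lra. Qed.

Lemma root_eq A B : 0 < -A - 2 -> 1 + A + B = 0 -> (- A - sqrt (A^2 - 4*B)) / 2 = 1.
Proof. intros. replace (A^2-4*B) with ((-A-2)^2) by nra.
  rewrite sqrt_pow2 by lra. lra. Qed.

Lemma root_gt A B : 0 < -A - 2 -> 0 < 1 + A + B -> 1 < (- A - sqrt (A^2 - 4*B)) / 2.
Proof. intros. destruct (Rle_dec (A^2 - 4*B) 0).
  - rewrite sqrt_neg_0 by lra. lra.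
  - assert (sqrt (A^2-4*B) < sqrt ((-A-2)^2)) by (apply sqrt_lt_1_alt; nra).
    rewrite sqrt_pow2 in H1 by lra. lra. Qed.

Lemma acosh_1 : acosh 1 = 0.
Proof. unfold acosh. replace (1^2-1) with 0 by ring. rewrite sqrt_0, Rplus_0_r. apply ln_1. Qed.

Lemma acosh_gt z : 1 < z -> 0 < acosh z.
Proof. intros. unfold acosh. rewrite <- ln_1. apply ln_increasing. lra.
  pose proof (sqrt_pos (z^2-1)). lra. Qed.

Lemma eps1_ge0 Kx Ky Kz qx qy : 0 < Kx -> 0 < Ky -> 0 < Kz -> 0 <= eps1 Kx Ky Kz qx qy.
Proof. intros. unfold eps1, z1.
  pose proof (negA Kx Ky Kz qx qy H H0 H1).
  pose proof (fone_ge Kx Ky Kz qx qy H H0). unfold fone in H3.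
  destruct (Rle_lt_or_eq_dec 0 (1 + coefA Kx Ky Kz qx qy + coefB Kx Ky Kz qx qy)) as [h|h].
  - pose proof (pow2_ge_0 (Xf Kx Ky qy - cosh (2 * Kz))). lra.
  - left. apply acosh_gt. apply root_gt; auto.
  - rewrite root_eq by auto. rewrite acosh_1. lra. Qed.

Lemma eps1_zero Kx Ky Kz qx qy : 0 < Kx -> 0 < Ky -> 0 < Kz -> fone Kx Ky Kz qx qy = 0 ->
   eps1 Kx Ky Kz qx qy = 0.
Proof. intros. unfold eps1, z1. unfold fone in H2.
  pose proof (negA Kx Ky Kz qx qy H H0 H1). rewrite root_eq by auto. apply acosh_1. Qed.

Lemma eps1_pos Kx Ky Kz qx qy : 0 < Kx -> 0 < Ky -> 0 < Kz -> 0 < fone Kx Ky Kz qx qy ->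
   0 < eps1 Kx Ky Kz qx qy.
Proof. intros. unfold eps1, z1. unfold fone in H2.
  pose proof (negA Kx Ky Kz qx qy H H0 H1). apply acosh_gt. apply root_gt; auto. Qed.

Lemma T_to Kx Ky Kz : 0 < Kx -> 0 < Ky -> 0 < Kz -> Rabs (Kx - Ky) <= Kz <= Kx + Ky ->
  cosh (2*Kx - 2*Ky) <= cosh (2*Kz) <= cosh (2*Kx + 2*Ky).
Proof. intros. split.
  - unfold Rabs in H2. destruct (Rcase_abs (Kx - Ky)).
    + replace (2*Kx - 2*Ky) with (- (2*Ky - 2*Kx)) by ring. rewrite ch_even. apply ch_le; lra.
    + apply ch_le; lra.
  - apply ch_le; lra. Qed.

Lemma notT Kx Ky Kz : 0 < Kx -> 0 < Ky -> 0 < Kz -> ~ (Rabs (Kx - Ky) <= Kz <= Kx + Ky) ->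
  cosh (2*Kz) < cosh (2*Kx - 2*Ky) \/ cosh (2*Kx + 2*Ky) < cosh (2*Kz).
Proof. intros. destruct (Rle_dec Kz (Kx + Ky)).
  - left. assert (Kz < Rabs (Kx - Ky)) by (apply Rnot_le_lt; intro; apply H2; lra).
    unfold Rabs in H3. destruct (Rcase_abs (Kx - Ky)).
    + replace (2*Kx - 2*Ky) with (- (2*Ky - 2*Kx)) by ring. rewrite ch_even. apply ch_lt; lra.
    + apply ch_lt; lra.
  - right. apply ch_lt; lra. Qed.

Lemma fone_pos_notT Kx Ky Kz qx qy : 0 < Kx -> 0 < Ky -> 0 < Kz -> ~ (Rabs (Kx - Ky) <= Kz <= Kx + Ky) ->
  0 < fone Kx Ky Kz qx qy.
Proof. intros. pose proof (notT Kx Ky Kz H H0 H1 H2). pose proof (Xf_bounds Kx Ky qy H H0).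
  pose proof (fone_ge Kx Ky Kz qx qy H H0).
  assert (Xf Kx Ky qy - cosh (2*Kz) <> 0) by lra.
  set (d := Xf Kx Ky qy - cosh (2*Kz)) in *.
  assert (0 < d^2). { destruct (Rtotal_order d 0) as [a|[a|a]]; [nra|lra|nra]. }
  lra. Qed.

Lemma at_star Kx Ky Kz qys : 0 < Kx -> 0 < Ky -> 0 < Kz ->
  cos qys = (cosh (2*Kz) - cosh (2*Kx) * cosh (2*Ky)) / (sinh (2*Kx) * sinh (2*Ky)) ->
  eps1 Kx Ky Kz 0 qys = 0.
Proof. intros. apply eps1_zero; auto. unfold fone. rewrite fone_id, cos_0.
  unfold Xf. rewrite H2.
  pose proof (sh_pos (2*Kx) ltac:(lra)). pose proof (sh_pos (2*Ky) ltac:(lra)).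
  field. split; lra. Qed.

Theorem mainTheorem6 (Kx Ky Kz : R) :
  0 < Kx -> 0 < Ky -> 0 < Kz ->
  (min_BZ_is (eps1 Kx Ky Kz) 0 <-> Rabs (Kx - Ky) <= Kz <= Kx + Ky) /\
  (Rabs (Kx - Ky) <= Kz <= Kx + Ky ->
     forall qys : R,
       cos qys = (cosh (2*Kz) - cosh (2*Kx) * cosh (2*Ky)) / (sinh (2*Kx) * sinh (2*Ky)) ->
       eps1 Kx Ky Kz 0 qys = 0 /\ eps1 Kx Ky Kz 0 (- qys) = 0) /\
  (~ (Rabs (Kx - Ky) <= Kz <= Kx + Ky) ->
     forall qx qy : R, 0 < eps1 Kx Ky Kz qx qy).
Proof.
  intros HX HY HZ.
  assert (PartB : Rabs (Kx - Ky) <= Kz <= Kx + Ky ->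
     forall qys : R,
       cos qys = (cosh (2*Kz) - cosh (2*Kx) * cosh (2*Ky)) / (sinh (2*Kx) * sinh (2*Ky)) ->
       eps1 Kx Ky Kz 0 qys = 0 /\ eps1 Kx Ky Kz 0 (- qys) = 0).
  { intros _ qys Hq. split; apply at_star; auto. rewrite cos_neg; auto. }
  split; [|split; [exact PartB|]].
  - split.
    + intros [[qx [qy [_ Hq]]] _].
      destruct (Classical_Prop.classic (Rabs (Kx - Ky) <= Kz <= Kx + Ky)) as [h|h]; auto.
      pose proof (eps1_pos Kx Ky Kz qx qy HX HY HZ (fone_pos_notT Kx Ky Kz qx qy HX HY HZ h)). lra.
    + intros HT. split.
      * pose proof (T_to Kx Ky Kz HX HY HZ HT). rewrite ch_minus, ch_plus in H.
        pose proof (sh_pos (2*Kx) ltac:(lra)). pose proof (sh_pos (2*Ky) ltac:(lra)).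
        assert (Hp : 0 < sinh (2*Kx) * sinh (2*Ky)) by nra.
        set (w := (cosh (2*Kz) - cosh (2*Kx) * cosh (2*Ky)) / (sinh (2*Kx) * sinh (2*Ky))).
        assert (Hw : -1 <= w <= 1).
        { unfold w. split.
          - apply (Rmult_le_reg_r (sinh (2*Kx) * sinh (2*Ky))); auto. field_simplify; lra.
          - apply (Rmult_le_reg_r (sinh (2*Kx) * sinh (2*Ky))); auto. field_simplify; lra. }
        exists 0, (acos w). pose proof (acos_bound w). pose proof PI_RGT_0.
        split. unfold in_BZ; lra.
        apply (proj1 (PartB HT (acos w) (cos_acos w Hw))).
      * intros. apply eps1_ge0; auto.
  - intros h qx qy. apply eps1_pos; auto. apply fone_pos_notT; auto.
Qed.
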